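(* Let $n\ge3$ and $j\ge0$. Then $\mathcal{N}_j\subseteq N_{\mathcal{B}}(\mathbb{Z}\mathcal{N}_{j-1})$, where $N_{\mathcal{B}}(\mathbb{Z}\mathcal{N}_{j-1})=\{b\in\mathcal{B}: [b,m]\in\mathbb{Z}\mathcal{N}_{j-1}\text{ for all } m\in\mathbb{Z}\mathcal{N}_{j-1}\}$ and $\mathbb{Z}\mathcal{N}_{j-1}$ is the $\mathbb{Z}$-span of $\mathcal{N}_{j-1}$ in $\mathfrak{L}(n)$.
   Context: Fix an integer $n\ge 3$. A partition is a sequence $\Lambda=(\lambda_j)_{j\ge1}$ of non-negative integers with finite support; $\mathrm{wt}(\Lambda)=\sum_j j\lambda_j$; $\mathrm{Part}(k)$ is the set of partitions with $\lambda_j=0$ for $j>k$. Write $x^\Lambda=\prod_j x_j^{\lambda_j}$, $\deg(x^\Lambda)=\sum_j\lambda_j$, and let $\partial_k$ be the partial derivative with respect to $x_k$. $\mathfrak{L}(n)$ is the free $\mathbb{Z}$-module with basis $\mathcal{B}=\{x^\Lambda\partial_k : 1\le k\le n,\ \Lambda\in\mathrm{Part}(k-1)\}$, a Lie ring with bracket defined on basis elements by $[x^\Lambda\partial_k,x^\Theta\partial_j]=\partial_j(x^\Lambda)x^\Theta\partial_k$ if $j<k$, $-x^\Lambda\partial_k(x^\Theta)\partial_j$ if $j>k$, $0$ if $j=k$, extended bilinearly. For an integer $i\ge-1$, let $r_i\in\{1,\dots,n-1\}$ with $i\equiv r_i\pmod{n-1}$ and $h_i=\lfloor (i-1)/(n-1)\rfloor+1$.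 Define $\mathrm{WD}(x^\Lambda\partial_k)=\mathrm{wt}(\Lambda)-\deg(x^\Lambda)+n-k$ and $\mathrm{lev}_i(x^\Lambda\partial_k)=h_i\,\mathrm{WD}(x^\Lambda\partial_k)+\deg(x^\Lambda)-1$. For $i\ge-1$, $\mathcal{N}_i=\{b\in\mathcal{B}: \mathrm{lev}_j(b)\le j\text{ for some integer } -1\le j\le i\}$. *)

(* Defs.v *)
From mathcomp Require Import all_boot all_order all_algebra.
Set Implicit Arguments. Unset Strict Implicit. Unset Printing Implicit Defensive.
Import Order.TTheory GRing.Theory Num.Theory.
Local Open Scope ring_scope.

(* A (raw) basis symbol x^Lambda d_k is a pair (k, lam) where
   lam = [:: lambda_1; ...; lambda_{k-1}] (so Lambda \in Part(k-1)). *)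
Definition bas := (nat * seq nat)%type.

(* b is in the basis B of L(n): 1 <= k <= n and Lambda in Part(k-1),
   represented canonically by a list of length exactly k-1. *)
Definition is_basis (n : nat) (b : bas) : bool :=
  (0 < b.1 <= n)%N && (size b.2 == b.1.-1).

Definition wt (b : bas) : nat := (\sum_(i < size b.2) i.+1 * nth 0 b.2 i)%N.
Definition deg (b : bas) : nat := sumn b.2.

Definition WD (n : nat) (b : bas) : int :=
  (wt b)%:Z - (deg b)%:Z + n%:Z - (b.1)%:Z.

(* h_i = floor((i-1)/(n-1)) + 1  (divz is floor division for positive divisor) *)
Definition hh (n : nat) (i : int) : int := ((i - 1) %/ (n%:Z - 1))%Z + 1.

Definition lev (n : nat) (i : int) (b : bas) : int :=
  hh n i * WD n b + (deg b)%:Z - 1.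

Definition inN (n : nat) (i : int) (b : bas) : Prop :=
  is_basis n b /\ exists j : int, (-1 <= j) /\ (j <= i) /\ (lev n j b <= j).

(* Elements of the free Z-module L(n): formal Z-linear combinations of basis
   symbols; two formal sums denote the same element iff they have the same
   coefficient function. *)
Definition elt := seq (int * bas).

Definition coeff (m : elt) (b : bas) : int := \sum_(t <- m | t.2 == b) t.1.

(* Bracket of basis elements, as (integer coefficient, basis element):
   [x^L d_k, x^T d_j] =  lambda_j x^(L - e_j + T) d_k   if j < k
                      = -theta_k  x^(L + T - e_k) d_j   if j > k
                      = 0                               if j = k.
   (When the coefficient is 0 the monomial part is irrelevant.) *)
Definition bracket_basis (b1 b2 : bas) : int * bas :=
  let: (k, L) := b1 in let: (j, T) := b2 in
  if (j < k)%N then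
    ((nth 0 L j.-1)%:Z,
     (k, mkseq (fun i => nth 0 L i - (i == j.-1) + nth 0 T i)%N k.-1))
  else if (k < j)%N then
    (- (nth 0 T k.-1)%:Z,
     (j, mkseq (fun i => nth 0 T i - (i == k.-1) + nth 0 L i)%N j.-1))
  else (0, b1).

Definition bracket (m1 m2 : elt) : elt :=
  [seq (let c := bracket_basis t1.2 t2.2 in (t1.1 * t2.1 * c.1, c.2))
  | t1 <- m1, t2 <- m2].

Definition inZspan (S : bas -> Prop) (m : elt) : Prop :=
  exists s : elt, (forall t, t \in s -> S t.2) /\ (forall b, coeff s b = coeff m b).

Definition of_bas (b : bas) : elt := [:: (1, b)].

Definition inNormalizerB (n : nat) (S : bas -> Prop) (b : bas) : Prop :=
  is_basis n b /\ forall m : elt, inZspan S m -> inZspan S (bracket (of_bas b) m).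

(* Main.v *)
Set Warnings "-notation-overridden,-ambiguous-paths".
Require Import Defs.
From mathcomp Require Import all_boot all_order all_algebra.
From mathcomp Require Import zify.
Import Order.TTheory GRing.Theory Num.Theory.
Local Open Scope nat_scope.

Definition Sw (w : nat -> nat) K (L : seq nat) := \sum_(i < K) w i * nth 0 L i.

Lemma S_wide w K L : size L <= K -> Sw w K L = Sw w (size L) L.
Proof.
move=> hK; rewrite /Sw (big_ord_widen K (fun i => w i * nth 0 L i) hK) [RHS]big_mkcond.
apply: eq_bigr => i _; case: ifP => // /negbT; rewrite -leqNgt => h.
by rewrite nth_default // muln0.
Qed.

Lemma sumn_S L : sumn L = Sw (fun _ => 1) (size L) L.
Proof.
rewrite /Sw; elim: L => [|x L IH] /=; first by rewrite big_ord0.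
by rewrite big_ord_recl /= mul1n IH.
Qed.

Lemma wt_S k L : wt (k, L) = Sw (fun i => i.+1) (size L) L.
Proof. by []. Qed.

Lemma deg_S k L : deg (k, L) = Sw (fun _ => 1) (size L) L.
Proof. by rewrite /deg sumn_S. Qed.

Lemma deg_le_wt L : Sw (fun _ => 1) (size L) L <= Sw (fun i => i.+1) (size L) L.
Proof. rewrite /Sw; apply: leq_sum => i _; rewrite leq_mul2r; lia. Qed.

Lemma wt_le L : Sw (fun i => i.+1) (size L) L <= size L * Sw (fun _ => 1) (size L) L.
Proof.
rewrite /Sw big_distrr /=; apply: leq_sum => i _; rewrite mul1n leq_mul2r.
by rewrite ltn_ord orbT.
Qed.

Lemma wt_idx L m : m < size L ->
  Sw (fun _ => 1) (size L) L + m * nth 0 L m <= Sw (fun i => i.+1) (size L) L.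
Proof.
move=> hm.
have -> : Sw (fun i => i.+1) (size L) L = Sw (fun _ => 1) (size L) L + \sum_(i < size L) i * nth 0 L i.
  by rewrite /Sw -big_split /=; apply: eq_bigr => i _; rewrite mulSn mul1n.
rewrite leq_add2l (bigD1 (Ordinal hm)) //=; exact: leq_addr.
Qed.

Lemma S_mk w K L T j : size L = K -> size T <= K -> 0 < j -> j.-1 < K ->
  0 < nth 0 L j.-1 ->
  let M := mkseq (fun i => nth 0 L i - (i == j.-1) + nth 0 T i) K in
  size M = K /\ Sw w K M + w j.-1 = Sw w K L + Sw w K T.
Proof.
move=> hL hT hj hjK hpos M; split; first by rewrite size_mkseq.
have hd : \sum_(i < K) w i * (nat_of_ord i == j.-1) = w j.-1.
  rewrite (bigD1 (Ordinal hjK)) //= eqxx muln1 big1 ?addn0 // => i hi.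
  have : (nat_of_ord i) != j.-1 by apply: contra hi => /eqP e; apply/eqP/val_inj.
  by move/negbTE => ->; rewrite muln0.
rewrite -hd /Sw -!big_split /=; apply: eq_bigr => i _.
rewrite /M nth_mkseq //.
have [e|ne] := eqVneq (nat_of_ord i) j.-1.
  rewrite -e in hpos *; cbn [nat_of_bool]; nia.
cbn [nat_of_bool]; nia.
Qed.
Local Open Scope ring_scope.

Lemma basis_facts n k L : is_basis n (k, L) ->
  [/\ (0 < k <= n)%N, size L = k.-1,
      (Sw (fun _ => 1) (size L) L <= Sw (fun i => i.+1) (size L) L)%N &
      (Sw (fun i => i.+1) (size L) L <= k.-1 * Sw (fun _ => 1) (size L) L)%N].
Proof.
rewrite /is_basis /= => /andP [hk /eqP hs]; split => //; first exact: deg_le_wt.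
by rewrite -hs; exact: wt_le.
Qed.

Lemma br_core n k L j T : is_basis n (k, L) -> is_basis n (j, T) -> (j < k)%N ->
  (0 < nth 0 L j.-1)%N ->
  let M := mkseq (fun i => (nth 0 L i - (i == j.-1) + nth 0 T i)%N) k.-1 in
  [/\ is_basis n (k, M),
      WD n (k, M) = (WD n (k, L) + WD n (j, T) - (n%:Z - 1)),
      (deg (k, M))%:Z = ((deg (k, L))%:Z + (deg (j, T))%:Z - 1) &
      (WD n (k, L) = 0 -> deg (j, T) = 0 /\ WD n (j, T) = (n%:Z - 1)%R)].
Proof.
move=> bL bT hjk hpos M.
have [hk hL dwL wdL] := @basis_facts n k L bL.
have [hj hT dwT wdT] := @basis_facts n j T bT.
have hjK : (j.-1 < k.-1)%N by lia.
have hTK : (size T <= k.-1)%N by lia.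
have [hM e1] := @S_mk (fun _ => 1) _ L T j hL hTK (proj1 (andP hj)) hjK hpos.
have [_ e2] := @S_mk (fun i => i.+1) _ L T j hL hTK (proj1 (andP hj)) hjK hpos.
rewrite -/M in hM e1 e2.
rewrite (S_wide (fun _ => 1) _ _ hTK) in e1; rewrite (S_wide (fun i => i.+1) _ _ hTK) in e2.
have bM : is_basis n (k, M) by rewrite /is_basis /= hM eqxx andbT.
rewrite /WD !wt_S !deg_S /= hM hL hT.
rewrite hT in e1 e2; rewrite hL in dwL wdL; rewrite hT in dwT wdT.
rewrite /= in e1 e2. set wM := Sw _ k.-1 M in e2 *. set dM := Sw _ k.-1 M in e1 *. set wL := Sw _ k.-1 L in e2 dwL wdL *. set dL := Sw _ k.-1 L in e1 dwL wdL *. set wT := Sw _ j.-1 T in e2 dwT wdT *. set dT := Sw _ j.-1 T in e1 dwT wdT *. split => //; try lia.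
move=> h0.
have hidx := wt_idx L (j.-1) ltac:(lia).
rewrite hL -/wL -/dL in hidx.
have j1 : j = 1%N by nia.
have T0 : T = [::] by apply/size0nil; lia.
rewrite /dT /wT T0 j1 /Sw !big_ord0; split => //; lia.
Qed.
Lemma hh_mono n i i' : (2 <= n)%N -> i <= i' -> hh n i <= hh n i'.
Proof.
move=> hn hi; rewrite /hh lerD2r; apply: lez_pdiv2r; first lia.
lia.
Qed.

Lemma hh_ge0 n i : (3 <= n)%N -> -1 <= i -> 0 <= hh n i.
Proof.
move=> hn hi; rewrite /hh.
have: -1 <= ((i - 1) %/ (n%:Z - 1))%Z by rewrite lez_divRL; lia.
lia.
Qed.

Lemma hh_bound n i : (2 <= n)%N -> i <= hh n i * (n%:Z - 1).
Proof.
move=> hn; rewrite /hh.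
have hN : (n%:Z - 1) != 0 by lia.
have := ltz_mod (i - 1) hN; have := divz_eq (i-1) (n%:Z - 1).
have -> : `|n%:Z - 1| = (n%:Z - 1) by lia.
set q := ((i - 1) %/ (n%:Z - 1))%Z; set r := ((i - 1) %% (n%:Z - 1))%Z.
move=> e hr; rewrite mulrDl mul1r; lia.
Qed.
Lemma arith1 (N h1 h A B a b i1 i : int) :
 0 <= h1 -> h1 <= h -> A <= N -> h1*A + a - 1 <= i1 -> i1 <= h1*N -> h*B + b - 1 <= i ->
 h*(A+B-N) + (a+b-1) - 1 <= i.
Proof.
move=> *. have : 0 <= (h-h1)*(N-A) by apply: mulr_ge0; lia.
nia.
Qed.

Lemma arith2 (N h' h1 h2 A B a b i i2 : int) :
 1 <= N -> 0 <= A -> 0 <= a -> B <= N -> 0 <= h2 -> h2 <= h' -> h' <= h1 ->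
 i <= h1*N -> i2 <= h2*N -> i2 <= i-1 -> h1*A + a - 1 <= i -> h2*B + b - 1 <= i2 ->
 (A = 0 -> b = 0 /\ B = N) -> (b = 1 -> B <= N-1) ->
 h'*(A+B-N) + (a+b-1) - 1 <= i-1.
Proof.
move=> hN hA ha hB h20 h2' h'1 hi hi2 hii2 l1 l2 hA0 hb1.
have [A0|Apos] : A = 0 \/ 1 <= A by lia.
  have [-> ->] := hA0 A0; rewrite A0; nia.
have p1 : 0 <= (h1-h')*A by apply: mulr_ge0; lia.
have p2 : 0 <= (h'-h2)*(N-B) by apply: mulr_ge0; lia.
have [e1|lt1] : h' = h1 \/ h' + 1 <= h1 by lia.
- have [eB|ltB] : B = N \/ B + 1 <= N by lia.
  + subst B. have : b <> 1 by move=> /hb1; lia.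
    nia.
  + have [e2|lt2] : h' = h2 \/ h2 + 1 <= h' by lia.
    * subst h' h1; nia.
    * have p3 : 1 <= (h'-h2)*(N-B) by have := @mulr_ge0 _ (h'-h2-1) (N-B-1); nia.
      nia.
- have p3 : A <= (h1-h')*A by have := @mulr_ge0 _ (h1-h'-1) A; nia.
  nia.
Qed.

Lemma WD_bounds n k L : is_basis n (k, L) ->
  [/\ 0 <= WD n (k, L), (deg (k, L) = 1%N -> WD n (k, L) <= n%:Z - 2) &
      (deg (k, L) = 0%N -> WD n (k, L) <= n%:Z - 1)].
Proof.
move=> bL; have [hk hL dw wd] := @basis_facts n k L bL.
rewrite /WD wt_S deg_S; set w := Sw (fun i => i.+1) (size L) L in dw wd *; set d := Sw (fun _ => 1%N) (size L) L in dw wd *.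
rewrite /=; split; first lia.
- move=> d1; rewrite d1 in wd; lia.
- move=> d0; rewrite d0 in wd; lia.
Qed.

Lemma WD_le n i b : (3 <= n)%N -> is_basis n b -> -1 <= i -> lev n i b <= i ->
  WD n b <= n%:Z - 1.
Proof.
case: b => k L hn bL hi; rewrite /lev.
have [W0 W1 W2] := @WD_bounds n k L bL.
have h0 := @hh_ge0 n i hn hi; have hb := @hh_bound n i ltac:(lia).
set h := hh n i in h0 hb *; set A := WD n (k, L) in W0 W1 W2 *.
have hd : 0 <= (deg (k, L))%:Z by [].
have [e|hpos] : h = 0 \/ 1 <= h by lia.
- rewrite e mul0r add0r => hl.
  have [d0|d1] : deg (k, L) = 0%N \/ deg (k, L) = 1%N by lia.
  + by have := W2 d0.
  + have := W1 d1; lia.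
- move=> hl; case: (lerP A (n%:Z - 1)) => // hA.
  have : 0 <= h * (A - n%:Z) by apply: mulr_ge0; lia.
  move=> p.
  have d0 : deg (k, L) = 0%N by nia.
  have := W2 d0; lia.
Qed.

Lemma br_props n b b' : is_basis n b -> is_basis n b' ->
  (bracket_basis b b').1 != 0 ->
  [/\ is_basis n (bracket_basis b b').2,
      WD n (bracket_basis b b').2 = WD n b + WD n b' - (n%:Z - 1),
      (deg (bracket_basis b b').2)%:Z = (deg b)%:Z + (deg b')%:Z - 1 &
      (WD n b = 0 -> deg b' = 0%N /\ WD n b' = n%:Z - 1)].
Proof.
case: b => k L; case: b' => j T bL bT; rewrite /bracket_basis.
case: (ltngtP j k) => hjk /=.
- move=> hnz; have hpos : (0 < nth 0 L j.-1)%N by move: hnz; case: (nth 0 L j.-1).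
  exact: (@br_core n k L j T bL bT hjk hpos).
- move=> hnz; have hpos : (0 < nth 0 T k.-1)%N.
    by move: hnz; case: (nth 0 T k.-1).
  have [h1 h2 h3 _] := @br_core n j T k L bT bL hjk hpos.
  split => //; first by rewrite h2; lia.
    by rewrite h3; lia.
  move=> h0; exfalso.
  have [hk _ dw _] := @basis_facts n k L bL.
  have [hj _ _ _] := @basis_facts n j T bT.
  move: h0; rewrite /WD wt_S deg_S /=; lia.
- by move=> /eqP.
Qed.

Lemma WD_bounds' n b : is_basis n b ->
  [/\ 0 <= WD n b, (deg b = 1%N -> WD n b <= n%:Z - 2) &
      (deg b = 0%N -> WD n b <= n%:Z - 1)].
Proof. by case: b => k L; apply: WD_bounds. Qed.

Lemma key n j b b' : (3 <= n)%N -> inN n j b -> inN n (j - 1) b' ->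
  (bracket_basis b b').1 != 0 -> inN n (j - 1) (bracket_basis b b').2.
Proof.
move=> hn [bb [i1 [hi1 [hi1j l1]]]] [bb' [i2 [hi2 [hi2j l2]]]] hnz.
have [bc eW ed hA0] := @br_props n b b' bb bb' hnz.
split => //.
have WA := @WD_le n i1 b hn bb hi1 l1.
have WB := @WD_le n i2 b' hn bb' hi2 l2.
have [A0 _ _] := @WD_bounds' n b bb.
have [_ B1 _] := @WD_bounds' n b' bb'.
move: l1 l2; rewrite /lev eW ed.
set A := WD n b; set B := WD n b'; set a := (deg b)%:Z; set be := (deg b')%:Z.
have ha : 0 <= a by []. have hbe : 0 <= be by [].
have hb1 : be = 1 -> B <= n%:Z - 1 - 1.
  by move=> e; have := B1 ltac:(rewrite /be in e; lia); lia.
have hA0' : A = 0 -> be = 0 /\ B = n%:Z - 1.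
  by move=> e; have [d0 e2] := hA0 e; split => //; rewrite /be d0.
move=> l1 l2.
have h2 : (2 <= n)%N by lia.
case: (lerP i1 i2) => hii.
- exists i2; split => //; split => //.
  apply: (@arith1 (n%:Z - 1) (hh n i1) (hh n i2) A B a be i1 i2) => //.
  + exact: hh_ge0.
  + exact: hh_mono.
  + exact: hh_bound.
- exists (i1 - 1); split; first lia; split; first lia.
  apply: (@arith2 (n%:Z - 1) (hh n (i1 - 1)) (hh n i1) (hh n i2) A B a be i1 i2) => //.
  + lia.
  + exact: hh_ge0.
  + apply: hh_mono => //; lia.
  + apply: hh_mono => //; lia.
  + exact: hh_bound.
  + exact: hh_bound.
  + lia.
Qed.

Lemma coeff_cons u (s : elt) x :
  coeff (u :: s) x = (if u.2 == x then u.1 else 0) + coeff s x.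
Proof. by rewrite /coeff big_cons; case: ifP; rewrite ?add0r. Qed.

Lemma sum_X (F : bas -> int) (s : elt) (X : seq bas) : uniq X ->
  (forall t, t \in s -> t.2 \in X) ->
  \sum_(t <- s) t.1 * F t.2 = \sum_(x <- X) coeff s x * F x.
Proof.
move=> uX; elim: s => [|u s IH] hs.
  by rewrite big_nil big1 // => x _; rewrite /coeff big_nil mul0r.
rewrite big_cons IH; last by move=> t ht; apply: hs; rewrite inE ht orbT.
under [RHS]eq_bigr => x _ do rewrite coeff_cons mulrDl.
rewrite big_split /=; congr (_ + _).
have uX2 : u.2 \in X by apply: hs; rewrite inE eqxx.
rewrite (bigD1_seq u.2) //= eqxx big1 ?addr0 // => x hx.
by rewrite eq_sym (negPf hx) mul0r.
Qed.

Lemma sum_coeff (F : bas -> int) (s m : elt) : (forall x, coeff s x = coeff m x) ->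
  \sum_(t <- s) t.1 * F t.2 = \sum_(t <- m) t.1 * F t.2.
Proof.
move=> hc; set X := undup (map snd (s ++ m)).
have uX : uniq X by apply: undup_uniq.
rewrite (@sum_X F s X uX) ?(@sum_X F m X uX).
- by apply: eq_bigr => x _; rewrite hc.
- by move=> t ht; rewrite mem_undup map_cat mem_cat; apply/orP; right; apply: map_f.
- by move=> t ht; rewrite mem_undup map_cat mem_cat; apply/orP; left; apply: map_f.
Qed.

Lemma coeff_map (h : int * bas -> int * bas) (s : elt) c :
  coeff (map h s) c = \sum_(t <- s) (if (h t).2 == c then (h t).1 else 0).
Proof. by rewrite /coeff big_map big_mkcond. Qed.

Theorem corollary3p2 (n : nat) (j : int) :
  (3 <= n)%N -> 0 <= j ->
  forall b : bas, inN n j b -> inNormalizerB n (inN n (j - 1)) b.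
Proof.
move=> hn hj b hb; split; first by case: hb.
move=> m [s [Hs Hc]].
pose g t := (t.1 * (bracket_basis b t.2).1, (bracket_basis b t.2).2).
exists (map g (filter (fun t => (bracket_basis b t.2).1 != 0) s)); split.
- move=> t /mapP [u]; rewrite mem_filter => /andP [hnz hu] ->.
  exact: key hn hb (Hs u hu) hnz.
- move=> c.
  pose F y := if (bracket_basis b y).2 == c then (bracket_basis b y).1 else 0.
  have -> : bracket (of_bas b) m = map (fun t => (1 * t.1 * (bracket_basis b t.2).1, (bracket_basis b t.2).2)) m.
    by rewrite /bracket /of_bas /= cats0.
  rewrite !coeff_map big_filter_cond.
  transitivity (\sum_(t <- s) t.1 * F t.2).
    rewrite [LHS]big_mkcond; apply: eq_bigr => t _ /=; rewrite /F andbT.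
    by case: ifP => [_|/negbFE /eqP ->]; case: ifP; rewrite ?mulr0.
  rewrite (@sum_coeff F s m Hc); apply: eq_bigr => t _; rewrite /F mul1r.
  by case: ifP; rewrite ?mulr0.
Qed.
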